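(* Let $n\ge 5$, $k\in\{2,\dots,n-2\}$, and let $P=(P_i)_{i\in\mathbb Z/n}$ be an $n$-gon and $(q_i)_{i\in\mathbb Z/n}$ an $n$-tuple of lines in the projective plane, in general position. Put $Q_i=q_i\cap q_{i-k}$, so that $Q=(Q_i)$ is an $n$-gon with $q_i=Q_iQ_{i+k}$. Then the following are equivalent: (i) for every $i$, the lines $P_iP_{i+1}$, $q_i$, $q_{i-k}$ are concurrent, and the lines $P_iP_{i+k}$, $q_i$, $q_{i-1}$ are concurrent (equivalently, all quadrilateral tiles with clockwise vertex labels $q_{i-k},P_{i+1},q_i,P_i$ and $P_i,q_i,P_{i+k},q_{i-1}$ are coherent); (ii) $Q$ is inscribed in $P$ and $T_k(Q)$ is inscribed in $T_k(P)$.
   Context: For an $n$-gon $P=(P_i)_{i\in\mathbb Z/n}$ in the projective plane and $k\in\{2,\dots,n-2\}$, the $k$-diagonal pentagram map is $T_k(P)=P'$ with $P'_i=P_iP_{i+k}\cap P_{i+1}P_{i+k+1}$ (here $XY$ denotes the line through $X,Y$). A polygon $Q$ is inscribed in $P$ (same number of vertices) if $Q_i$ lies on the line $P_iP_{i+1}$ for all $i$. A quadrilateral tile labeled by points $A,B$ and lines $c,d$ is coherent iff $A=B$, or $c=d$, or the lines $AB$, $c$, $d$ are concurrent; more generally coherence means the multi-ratio $\frac{\boldsymbol c(\mathbf A)\boldsymbol d(\mathbf B)}{\boldsymbol c(\mathbf B)\boldsymbol d(\mathbf A)}$ of lifts equals $1$. *)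

(* Defs.v *)
(* Projective plane P^2(F) over an arbitrary field F,
   in homogeneous coordinates: points and lines are (nonzero) vectors of F^3,
   incidence is the dot product, the line through two points and the
   intersection of two lines are cross products. *)
From mathcomp Require Import all_boot all_order all_algebra.
Set Implicit Arguments. Unset Strict Implicit. Unset Printing Implicit Defensive.
Import GRing.Theory Num.Theory.
Local Open Scope ring_scope.

Section Proj.
Variable F : fieldType.

Definition vec3 := (F * F * F)%type.

Definition dot (u v : vec3) : F :=
  let: (u1, u2, u3) := u in let: (v1, v2, v3) := v in u1 * v1 + u2 * v2 + u3 * v3.

Definition cross (u v : vec3) : vec3 :=
  let: (u1, u2, u3) := u in let: (v1, v2, v3) := v in
  (u2 * v3 - u3 * v2, u3 * v1 - u1 * v3, u1 * v2 - u2 * v1).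

Definition det3 (u v w : vec3) : F := dot u (cross v w).

Definition join (X Y : vec3) : vec3 := cross X Y.
Definition meet (l m : vec3) : vec3 := cross l m.
Definition incident (X l : vec3) : bool := dot X l == 0.
Definition concurrent (l m r : vec3) : bool := det3 l m r == 0.

(* An n-gon (or n-tuple of lines) indexed by Z/n is an n-periodic map int -> vec3. *)
Definition periodic (n : nat) (P : int -> vec3) := forall i : int, P (i + n%:Z) = P i.

Definition distinct_mod (n : nat) (i j : int) : bool := ~~ (n%:Z %| (i - j))%Z.

Definition no_three_dependent (n : nat) (P : int -> vec3) :=
  forall i j l : int, distinct_mod n i j -> distinct_mod n j l -> distinct_mod n i l ->
    det3 (P i) (P j) (P l) != 0.

Definition Tk (k : nat) (P : int -> vec3) : int -> vec3 := fun i =>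
  meet (join (P i) (P (i + k%:Z))) (join (P (i + 1)) (P (i + k%:Z + 1))).

Definition inscribed (Q P : int -> vec3) := forall i : int, incident (Q i) (join (P i) (P (i + 1))).

Definition Qof (k : nat) (q : int -> vec3) : int -> vec3 := fun i => meet (q i) (q (i - k%:Z)).

(* general position of (P, q): P has no three collinear vertices, no three of the
   lines q are concurrent, and the polygons T_k(P), T_k(Q) produced by the
   constructions of the statement are again nondegenerate (no three collinear). *)
Definition general_position (n k : nat) (P q : int -> vec3) :=
  [/\ no_three_dependent n P, no_three_dependent n q,
      no_three_dependent n (Tk k P) & no_three_dependent n (Tk k (Qof k q))].

End Proj.

(* Main.v *)
Require Import Defs.
From mathcomp Require Import all_boot all_order all_algebra.
From mathcomp Require Import ring.
Import GRing.Theory Num.Theory.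
Set Implicit Arguments. Unset Strict Implicit.
Local Open Scope ring_scope.

Section H.
Variable F : fieldType.
Implicit Types a b c m u v w x y L : vec3 F.

Definition sc (g : F) (u : vec3 F) : vec3 F :=
  let: (u1, u2, u3) := u in (g * u1, g * u2, g * u3).

Lemma L2 a b c : exists g, cross (cross a b) (cross c a) = sc g a.
Proof.
case: a => [[a1 a2] a3]; case: b => [[b1 b2] b3]; case: c => [[c1 c2] c3].
exists (- det3 (a1,a2,a3) (b1,b2,b3) (c1,c2,c3)).
rewrite /det3 /cross /dot /sc; congr (_, _, _); ring.
Qed.

Lemma L2' a m b : exists g, cross (cross a m) (cross m b) = sc g m.
Proof.
case: a => [[a1 a2] a3]; case: b => [[b1 b2] b3]; case: m => [[c1 c2] c3].
exists (- det3 (c1,c2,c3) (a1,a2,a3) (b1,b2,b3)).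
rewrite /det3 /cross /dot /sc; congr (_, _, _); ring.
Qed.

Lemma Lsc g h u v : cross (sc g u) (sc h v) = sc (g * h) (cross u v).
Proof.
case: u => [[a1 a2] a3]; case: v => [[b1 b2] b3].
rewrite /cross /sc; congr (_, _, _); ring.
Qed.

Lemma dotC u v : dot u v = dot v u.
Proof. case: u => [[a1 a2] a3]; case: v => [[b1 b2] b3]; rewrite /dot; ring. Qed.

Lemma dot_sc g u v : dot (sc g u) v = g * dot u v.
Proof. case: u => [[a1 a2] a3]; case: v => [[b1 b2] b3]; rewrite /dot /sc; ring. Qed.

Lemma sc0 u : sc 0 u = (0, 0, 0).
Proof. case: u => [[a1 a2] a3]; by rewrite /sc !mul0r. Qed.

Lemma L5 x g w L : x = sc g w -> x != (0,0,0) -> (dot x L == 0) = (dot w L == 0).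
Proof.
move=> -> H; rewrite dot_sc mulf_eq0.
have -> : (g == 0) = false.
  by apply/negbTE; apply/eqP => E; move: H; rewrite E sc0 eqxx.
done.
Qed.

Lemma L5' y g m x : y = sc g m -> y != (0,0,0) -> (dot x y == 0) = (dot x m == 0).
Proof. by move=> E H; rewrite dotC (L5 _ E H) dotC. Qed.

Lemma det_nz1 u v w : det3 u v w != 0 -> u != (0,0,0).
Proof.
move=> H; apply/eqP => E; move: H; rewrite E /det3 /dot.
case: (cross v w) => [[a b] c]; by rewrite !mul0r !addr0 eqxx.
Qed.

Lemma det_nz23 u v w : det3 u v w != 0 -> cross v w != (0,0,0).
Proof.
move=> H; apply/eqP => E; move: H; rewrite /det3 E /dot.
case: u => [[a b] c]; by rewrite !mulr0 !addr0 eqxx.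
Qed.

Lemma detswap l a b : (det3 l b a == 0) = (dot (cross a b) l == 0).
Proof.
have -> : det3 l b a = - dot (cross a b) l.
  case: l => [[a1 a2] a3]; case: a => [[b1 b2] b3]; case: b => [[c1 c2] c3].
  rewrite /det3 /dot /cross; ring.
by rewrite oppr_eq0.
Qed.

Lemma det_dot l a b : det3 l a b = dot (cross a b) l.
Proof. by rewrite /det3 dotC. Qed.

End H.

Lemma dm (n : nat) (i j : int) : (2 < n)%N ->
  (i - j = 1 \/ i - j = -1 \/ i - j = 2 \/ i - j = -2) -> distinct_mod n i j.
Proof.
move=> Hn H; rewrite /distinct_mod dvdzE.
have Hn0 : (0 < n)%N by apply: leq_trans Hn.
case: H => [->|[->|[->|->]]] /=; rewrite ?gtnNdvd //; apply: leq_trans Hn => //.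
Qed.

Theorem mainTheorem2 (F : fieldType) (n k : nat) (P q : int -> vec3 F) :
  (5 <= n)%N -> (2 <= k)%N -> (k <= n - 2)%N ->
  periodic n P -> periodic n q ->
  general_position n k P q ->
  let Q := Qof k q in
  (forall i : int,
      concurrent (join (P i) (P (i + 1))) (q i) (q (i - k%:Z)) /\
      concurrent (join (P i) (P (i + k%:Z))) (q i) (q (i - 1)))
  <-> (inscribed Q P /\ inscribed (Tk k Q) (Tk k P)).
Proof.
move=> Hn _ _ _ _ [_ _ gP gQ] Q.
have Hn2 : (2 < n)%N by apply: leq_trans Hn.
have first i : concurrent (join (P i) (P (i + 1))) (q i) (q (i - k%:Z))
               = incident (Q i) (join (P i) (P (i + 1))).
  by rewrite /concurrent /incident det_dot.
have key i : incident (Tk k Q i) (join (Tk k P i) (Tk k P (i + 1)))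
    = concurrent (join (P (i + 1)) (P (i + 1 + k%:Z))) (q (i + 1)) (q (i + 1 - 1)).
  have nQ : Tk k Q i != (0,0,0).
    apply: (@det_nz1 _ _ (Tk k Q (i + 1)) (Tk k Q (i + 2))); apply: gQ; apply: dm => //.
    - by right; left; ring.
    - by right; left; ring.
    - by right; right; right; ring.
  have nP : cross (Tk k P i) (Tk k P (i + 1)) != (0,0,0).
    apply: (@det_nz23 _ (Tk k P (i + 2))); apply: gP; apply: dm => //.
    - by right; right; left; ring.
    - by right; left; ring.
    - by left; ring.
  have [g Eg] : exists g, Tk k Q i = sc g (cross (q i) (q (i + 1))).
    rewrite /Tk /Q /Qof /meet /join.
    have -> : i + k%:Z - k%:Z = i by ring.
    have -> : i + k%:Z + 1 - k%:Z = i + 1 by ring.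
    have [g1 ->] := L2 (q i) (q (i - k%:Z)) (q (i + k%:Z)).
    have [g2 ->] := L2 (q (i + 1)) (q (i + 1 - k%:Z)) (q (i + k%:Z + 1)).
    by exists (g1 * g2); rewrite Lsc.
  have [h Eh] : exists h, join (Tk k P i) (Tk k P (i + 1))
                   = sc h (cross (P (i + 1)) (P (i + k%:Z + 1))).
    rewrite /Tk /meet /join.
    have -> : i + 1 + k%:Z = i + k%:Z + 1 by ring.
    exact: L2'.
  rewrite /incident (L5 _ Eg nQ) (L5' _ Eh nP) /concurrent.
  have -> : i + 1 - 1 = i by ring.
  have -> : i + 1 + k%:Z = i + k%:Z + 1 by ring.
  by rewrite detswap dotC.
split.
- move=> H; split.
  + by move=> i; rewrite -first; case: (H i).
  + by move=> i; rewrite key; case: (H (i + 1)).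
- move=> [H1 H2] i; split; first by rewrite first.
  have := H2 (i - 1); rewrite key.
  by have -> : i - 1 + 1 = i by ring.
Qed.
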